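(* Let $G=(V,E)$ be a finite simple graph, let $A$ be a nonzero commutative ring with unity, and let $R=A[V]$ be the polynomial ring over $A$ whose variables are the vertices of $G$. Then the open neighborhood ideal $\mathcal{N}(G)=(X_{N(v)} \mid v\in V)R$ satisfies $$\mathcal{N}(G)=\bigcap_{D}(D)R=\bigcap_{D\ \mathrm{minimal}}(D)R,$$ where the first intersection runs over all total dominating sets $D$ of $G$, and the second over all minimal total dominating sets of $G$. Moreover, the second decomposition is irredundant.
   Context: For $v\in V$, $N(v)=\{u\in V: uv\in E\}$ is the open neighborhood of $v$, and for $S\subseteq V$, $N(S)=\bigcup_{v\in S}N(v)$. For $U\subseteq V$, $X_U=\prod_{v\in U}v\in A[V]$. For $D\subseteq V$, $(D)R$ denotes the ideal generated by the variables in $D$. A set $D\subseteq V$ is a total dominating set (TD-set) of $G$ if $N(D)=V$; it is a minimal TD-set if no proper subset of $D$ is a TD-set. *)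

(* Defs.v *)
From mathcomp Require Import all_boot all_order all_algebra.
From mathcomp Require Import multinomials.mpoly.
Set Implicit Arguments. Unset Strict Implicit. Unset Printing Implicit Defensive.
Import GRing.Theory.
Local Open Scope ring_scope.

(* A finite simple graph on vertex set 'I_n is given by an adjacency
   relation e : rel 'I_n, assumed symmetric and irreflexive. *)

Definition nbhd (n : nat) (e : rel 'I_n) (v : 'I_n) : {set 'I_n} :=
  [set u | e u v].

Definition nbhdS (n : nat) (e : rel 'I_n) (S : {set 'I_n}) : {set 'I_n} :=
  \bigcup_(v in S) nbhd e v.

Definition is_TD (n : nat) (e : rel 'I_n) (D : {set 'I_n}) : bool :=
  nbhdS e D == [set: 'I_n].

Definition is_minTD (n : nat) (e : rel 'I_n) (D : {set 'I_n}) : bool :=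
  minset (fun B : {set 'I_n} => is_TD e B) D.

Definition XU (A : comNzRingType) (n : nat) (U : {set 'I_n}) : {mpoly A[n]} :=
  \prod_(v in U) 'X_v.

Definition in_ideal (A : comNzRingType) (n : nat) (s : seq {mpoly A[n]})
    (p : {mpoly A[n]}) : Prop :=
  exists c : nat -> {mpoly A[n]}, p = \sum_(i < size s) c i * s`_i.

Definition var_ideal (A : comNzRingType) (n : nat) (D : {set 'I_n})
    (p : {mpoly A[n]}) : Prop :=
  in_ideal [seq ('X_v : {mpoly A[n]}) | v <- enum D] p.

Definition nbhd_ideal (A : comNzRingType) (n : nat) (e : rel 'I_n)
    (p : {mpoly A[n]}) : Prop :=
  in_ideal [seq XU A (nbhd e v) | v <- enum 'I_n] p.

(* Main.v *)
Require Import Defs.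
From mathcomp Require Import all_boot all_order all_algebra.
From mathcomp Require Import multinomials.mpoly.
Local Open Scope ring_scope.
Import GRing.Theory.

Section Helpers.
Variable (A : comNzRingType) (n : nat).
Implicit Types (s t : seq {mpoly A[n]}) (p q : {mpoly A[n]}).

Lemma in_ideal0 s : in_ideal s 0.
Proof. by exists (fun _ => 0); rewrite big1 // => i _; rewrite mul0r. Qed.

Lemma in_idealD s p q : in_ideal s p -> in_ideal s q -> in_ideal s (p + q).
Proof.
case=> c ->; case=> d ->; exists (fun i => c i + d i).
by rewrite -big_split /=; apply: eq_bigr => i _; rewrite mulrDl.
Qed.

Lemma in_idealM s r p : in_ideal s p -> in_ideal s (r * p).
Proof.
case=> c ->; exists (fun i => r * c i).
by rewrite mulr_sumr; apply: eq_bigr => i _; rewrite mulrA.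
Qed.

Lemma in_ideal_mem s x r : x \in s -> in_ideal s (r * x).
Proof.
move=> xs; have hi : (index x s < size s)%N by rewrite index_mem.
exists (fun i => if i == index x s then r else 0).
rewrite (bigD1 (Ordinal hi)) //= eqxx nth_index // big1 ?addr0 // => i /negbTE.
by rewrite -val_eqE /= => ->; rewrite mul0r.
Qed.

Lemma in_ideal_trans s t p :
  (forall x, x \in t -> in_ideal s x) -> in_ideal t p -> in_ideal s p.
Proof.
move=> H [c ->]; apply: big_ind.
- exact: in_ideal0.
- exact: in_idealD.
- by move=> i _; apply: in_idealM; apply: H; apply: mem_nth.
Qed.

Lemma coefMX0 (c : {mpoly A[n]}) u m : ~~ (u <= m)%MM -> (c * 'X_[u])@_m = 0.
Proof.
move=> H; rewrite (mpolyE c) mulr_suml raddf_sum /=; apply: big1 => k _.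
rewrite -scalerAl -mpolyXD mcoeffZ mcoeffX.
case: eqP => [E|]; last by rewrite mulr0.
by move: H; rewrite -E lem_addl.
Qed.

Lemma var_ideal_coef (D : {set 'I_n}) p (m : 'X_{1..n}) :
  var_ideal D p -> (forall i, i \in D -> m i = 0%N) -> p@_m = 0.
Proof.
move=> [c ->] H; rewrite raddf_sum /=; apply: big1 => j _.
have /mapP [d dD ->] := mem_nth 0 (ltn_ord j).
apply: coefMX0; rewrite lep1mP negbK; apply/eqP; apply: H.
by rewrite -mem_enum.
Qed.

Lemma var_ideal_X (D : {set 'I_n}) d (m : 'X_{1..n}) :
  d \in D -> m d != 0%N -> var_ideal D ('X_[m] : {mpoly A[n]}).
Proof.
move=> dD md.
have le : (U_(d) <= m)%MM by rewrite lep1mP.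
rewrite -(submK le) mpolyXD; apply: in_ideal_mem.
by apply/mapP; exists d; rewrite ?mem_enum.
Qed.

Lemma X_factor (U : {set 'I_n}) (m : 'X_{1..n}) :
  (forall i, i \in U -> m i != 0%N) ->
  exists q, 'X_[m] = q * XU A U.
Proof.
move=> H; rewrite mpolyXE_id (bigID (fun i => i \in U)) /=.
have -> : \prod_(i < n | i \in U) ('X_i : {mpoly A[n]}) ^+ m i =
          \prod_(i < n | i \in U) ('X_i ^+ (m i).-1 * 'X_i).
  apply: eq_bigr => i iU; rewrite -exprSr prednK // lt0n; exact: H.
rewrite big_split /=.
exists ((\prod_(i < n | i \in U) ('X_i : {mpoly A[n]}) ^+ (m i).-1) *
        \prod_(i < n | i \notin U) 'X_i ^+ m i).
by rewrite /XU mulrAC.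
Qed.

End Helpers.

Section Main.
Variable (A : comNzRingType) (n : nat) (e : rel 'I_n).
Hypothesis e_sym : ssrbool.symmetric e.

Lemma P1 (p : {mpoly A[n]}) :
  nbhd_ideal e p -> forall D, is_TD e D -> var_ideal D p.
Proof.
move=> Hp D /eqP TD; apply: in_ideal_trans Hp => x /mapP [v _ ->].
have : v \in nbhdS e D by rewrite TD inE.
case/bigcupP => d dD; rewrite inE => evd.
have dN : d \in nbhd e v by rewrite inE e_sym.
rewrite /XU (bigD1 d) //= mulrC; apply: in_ideal_mem.
by apply/mapP; exists d; rewrite ?mem_enum.
Qed.

Lemma X_nbhd (m : 'X_{1..n}) v :
  (forall i, i \in nbhd e v -> m i != 0%N) -> nbhd_ideal e ('X_[m] : {mpoly A[n]}).
Proof.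
move=> H; have [q ->] := @X_factor A n _ _ H.
by apply: in_ideal_mem; apply/mapP; exists v; rewrite ?mem_enum.
Qed.

Lemma P2 (p : {mpoly A[n]}) :
  (forall D, is_minTD e D -> var_ideal D p) -> nbhd_ideal e p.
Proof.
move=> H; rewrite (mpolyE p) big_seq; apply: big_ind.
- exact: in_ideal0.
- exact: in_idealD.
move=> m mp; rewrite -mul_mpolyC; apply: in_idealM.
have [/existsP [v /subsetP sub]|nex] :=
  boolP [exists v, nbhd e v \subset [set i | m i != 0%N]].
  by apply: (@X_nbhd m v) => i /sub; rewrite inE.
exfalso.
have TD : is_TD e [set i | m i == 0%N].
  apply/eqP/setP => v; rewrite inE; apply/bigcupP.
  have /subsetPn [u uN] : ~~ (nbhd e v \subset [set i | m i != 0%N]).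
    by apply: contra nex => s; apply/existsP; exists v.
  rewrite inE negbK => mu; exists u; first by rewrite inE.
  by move: uN; rewrite !inE e_sym.
have [D minD sub] := minset_exists TD.
have h := @var_ideal_coef A n D p m (H D minD).
move: mp; rewrite mcoeff_msupp h ?eqxx // => i iD.
by have := subsetP sub i iD; rewrite inE => /eqP.
Qed.

End Main.

Theorem theorem2p10 (A : comNzRingType) (n : nat) (e : rel 'I_n)
    (e_sym : ssrbool.symmetric e) (e_irr : irreflexive e) :
  (* N(G) = intersection of (D)R over all TD-sets D *)
  (forall p : {mpoly A[n]},
     nbhd_ideal e p <-> (forall D : {set 'I_n}, is_TD e D -> var_ideal D p)) /\
  (* N(G) = intersection of (D)R over all minimal TD-sets D *)
  (forall p : {mpoly A[n]},
     nbhd_ideal e p <-> (forall D : {set 'I_n}, is_minTD e D -> var_ideal D p)) /\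
  (* the decomposition over minimal TD-sets is irredundant *)
  (forall D0 : {set 'I_n}, is_minTD e D0 ->
     exists p : {mpoly A[n]},
       (forall D : {set 'I_n}, is_minTD e D -> D != D0 -> var_ideal D p) /\
       ~ var_ideal D0 p).
Proof.
split; [|split].
- move=> p; split; first exact: P1.
  move=> H; apply: P2 => // D mD; apply: H; exact: minsetp mD.
- move=> p; split; last exact: P2.
  move=> Hp D mD; apply: P1 => //; exact: minsetp mD.
- move=> D0 mD0.
  pose m0 := [multinom (i \notin D0 : nat) | i < n].
  exists ('X_[m0]); split.
  + move=> D mD neq.
    have : ~~ (D \subset D0).
      apply/negP => sub; move/eqP: neq; apply.
      exact: minsetinf mD0 (minsetp mD) sub.
    case/subsetPn => d dD dD0.
    by apply: (@var_ideal_X A n D d m0) => //; rewrite mnmE dD0.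
  + move=> H; have h := @var_ideal_coef A n D0 _ m0 H.
    move: h; rewrite mcoeffX eqxx => h.
    have E : (1 : A) = 0 by apply: h => i iD0; rewrite mnmE iD0.
    by move: (@oner_neq0 A); rewrite E eqxx.
Qed.
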